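(* Let $R$ be a commutative multiplicative hyperring with identity, let $\alpha$ be a good endomorphism of $R$, and let $I$ be an $\alpha$-prime hyperideal of $R$. Then the prime radical $\sqrt{I}$ is an $\alpha$-prime hyperideal of $R$.
   Context: A multiplicative hyperring is an abelian group $(R,+)$ with a hyperoperation $\circ:R\times R\to \mathcal P^*(R)$ (nonempty subsets) such that $a\circ(b\circ c)=(a\circ b)\circ c$, $a\circ(b+c)\subseteq a\circ b+a\circ c$, $(b+c)\circ a\subseteq b\circ a+c\circ a$, and $a\circ(-b)=(-a)\circ b=-(a\circ b)$. Products of subsets are unions of elementwise products. Commutative means $a\circ b=b\circ a$. An identity $1$ satisfies $a\in1\circ a$ for all $a$. A hyperideal is a nonempty $I\subseteq R$ closed under subtraction with $r\circ x\subseteq I$ for $r\in R$, $x\in I$. Standing assumption: every hyperideal is a $\mathbf C$-hyperideal, i.e. for every finite product $A=r_1\circ\cdots\circ r_n$, $A\cap I\neq\emptyset$ implies $A\subseteq I$. A prime hyperideal is a proper hyperideal $P$ with $x\circ y\subseteq P\Rightarrow x\in P$ or $y\in P$. The prime radical $\sqrt I$ is the intersection of all prime hyperideals containing $I$, and equals $R$ if there are none. For $\mathbf C$-hyperideals, $\sqrt I=\{r: r^n\subseteq I \text{ for some } n\in\mathbb N\}$, where $r^n=r\circ\cdots\circ r$ ($n$ factors). A good endomorphism $\alpha$ satisfies $\alpha(x+y)=\alpha(x)+\alpha(y)$ and $\alpha(x\circ y)=\alpha(x)\circ\alpha(y)$. A hyperideal $I$ is $\alpha$-prime if for all $x,y$,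 $x\circ y\subseteq I$ implies $x\in I$ or $\alpha(y)\in I$. *)

(* Defs.v *)
From mathcomp Require Import all_boot all_algebra.
Set Implicit Arguments. Unset Strict Implicit. Unset Printing Implicit Defensive.
Import GRing.Theory.
Local Open Scope ring_scope.

Section Hyper.
Variable R : zmodType.
Definition hset := R -> Prop.
Variable mul : R -> R -> hset.

Definition hsingle (a : R) : hset := fun z => z = a.
Definition hsubset (A B : hset) : Prop := forall z, A z -> B z.
Definition hseteq (A B : hset) : Prop := forall z, A z <-> B z.
Definition hsetmul (A B : hset) : hset :=
  fun z => exists a b, A a /\ B b /\ mul a b z.
Definition hsetadd (A B : hset) : hset :=
  fun z => exists a b, A a /\ B b /\ z = a + b.
Definition hsetopp (A : hset) : hset := fun z => A (- z).

Record mult_hyperring : Prop := {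
  mh_nonempty : forall a b, exists z, mul a b z;
  mh_assoc : forall a b c,
      hseteq (hsetmul (hsingle a) (mul b c)) (hsetmul (mul a b) (hsingle c));
  mh_distl : forall a b c,
      hsubset (mul a (b + c)) (hsetadd (mul a b) (mul a c));
  mh_distr : forall a b c,
      hsubset (mul (b + c) a) (hsetadd (mul b a) (mul c a));
  mh_oppr : forall a b, hseteq (mul a (- b)) (hsetopp (mul a b));
  mh_oppl : forall a b, hseteq (mul (- a) b) (hsetopp (mul a b))
}.

Definition hcommutative : Prop := forall a b, hseteq (mul a b) (mul b a).
Definition has_identity : Prop := exists one : R, forall a, mul one a a.

Definition hyperideal (I : hset) : Prop :=
  (exists x, I x) /\
  (forall x y, I x -> I y -> I (x - y)) /\
  (forall r x, I x -> hsubset (mul r x) I).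

(* finite product r o r1 o ... o rn (left-associated; n+1 factors) *)
Fixpoint hprod (A : hset) (rs : seq R) : hset :=
  match rs with
  | [::] => A
  | s :: rs' => hprod (hsetmul A (hsingle s)) rs'
  end.
Definition finite_product (r : R) (rs : seq R) : hset := hprod (hsingle r) rs.

Definition C_hyperideal (I : hset) : Prop :=
  hyperideal I /\
  forall r rs, (exists z, finite_product r rs z /\ I z) ->
               hsubset (finite_product r rs) I.

Definition all_hyperideals_C : Prop :=
  forall I, hyperideal I -> C_hyperideal I.

Definition prime_hyperideal (P : hset) : Prop :=
  hyperideal P /\ (exists x, ~ P x) /\
  forall x y, hsubset (mul x y) P -> P x \/ P y.

(* intersection of all prime hyperideals containing I (= R if none) *)
Definition prime_radical (I : hset) : hset :=
  fun x => forall P, prime_hyperideal P -> hsubset I P -> P x.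

Definition good_endomorphism (alpha : R -> R) : Prop :=
  (forall x y, alpha (x + y) = alpha x + alpha y) /\
  (forall x y, hseteq (fun z => exists w, mul x y w /\ alpha w = z)
                      (mul (alpha x) (alpha y))).

Definition alpha_prime (alpha : R -> R) (I : hset) : Prop :=
  hyperideal I /\
  forall x y, hsubset (mul x y) I -> I x \/ I (alpha y).
End Hyper.

(* Main.v *)
Require Import Defs.
From mathcomp Require Import all_boot all_algebra.
From mathcomp Require Import boolp classical_sets.
Import GRing.Theory.
Set Implicit Arguments. Unset Strict Implicit.

Inductive Pow {R : zmodType} (mul : R -> R -> hset R) (z : R) : R -> Prop :=
| Pow_base : Pow mul z z
| Pow_mul : forall a b c, Pow mul z a -> Pow mul z b -> mul a b c -> Pow mul z c.

Lemma hyp_zero (R : zmodType) (mul : R -> R -> hset R) (P : hset R) :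
  hyperideal mul P -> P 0%R.
Proof. move=> [[x Px] [Hs _]]. have := Hs x x Px Px. by rewrite subrr. Qed.

Lemma hyp_opp (R : zmodType) (mul : R -> R -> hset R) (P : hset R) x :
  hyperideal mul P -> P x -> P (- x)%R.
Proof.
move=> HP Px. have := (proj1 (proj2 HP)) 0%R x (hyp_zero HP) Px.
by rewrite sub0r.
Qed.

Lemma hyp_add (R : zmodType) (mul : R -> R -> hset R) (P : hset R) x y :
  hyperideal mul P -> P x -> P y -> P (x + y)%R.
Proof.
move=> HP Px Py. have := (proj1 (proj2 HP)) x (- y)%R Px (hyp_opp HP Py).
by rewrite opprK.
Qed.

Lemma C2 (R : zmodType) (mul : R -> R -> hset R) (J : hset R) a b c :
  all_hyperideals_C mul -> hyperideal mul J -> mul a b c -> J c ->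
  hsubset (mul a b) J.
Proof.
move=> HC HJ Hc Jc. have [_ H] := HC J HJ.
have H2 := H a [:: b].
move=> v Hv. apply: H2.
- exists c; split => //. exists a, b. by split; [|split].
- exists a, b. by split; [|split].
Qed.

Lemma pow_prime (R : zmodType) (mul : R -> R -> hset R) (P : hset R) z s :
  all_hyperideals_C mul -> prime_hyperideal mul P -> Pow mul z s -> P s -> P z.
Proof.
move=> HC HP; elim=> [//|a b c _ IHa _ IHb Hc Pc].
have [HPi [_ Hpr]] := HP.
have := Hpr a b (C2 HC HPi Hc Pc). case; auto.
Qed.

Lemma pow_alpha (R : zmodType) (mul : R -> R -> hset R) alpha x s :
  good_endomorphism mul alpha -> Pow mul x s -> Pow mul (alpha x) (alpha s).
Proof.
move=> [_ Hg]; elim=> [|a b c _ IHa _ IHb Hc]; first exact: Pow_base.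
apply: (Pow_mul IHa IHb). apply/(Hg a b (alpha c)). by exists c.
Qed.

Lemma assocRL (R : zmodType) (mul : R -> R -> hset R) a b c f s :
  mult_hyperring mul -> mul a b f -> mul f c s ->
  exists v, mul b c v /\ mul a v s.
Proof.
move=> HM Hf Hs. have [_ H] := mh_assoc HM a b c s.
have [a' [v [-> [Hv Hs']]]] : hsetmul mul (hsingle a) (mul b c) s.
  apply: H. exists f, c. by split; [|split].
by exists v.
Qed.

Lemma assocLR (R : zmodType) (mul : R -> R -> hset R) a b c v s :
  mult_hyperring mul -> mul b c v -> mul a v s ->
  exists f, mul a b f /\ mul f c s.
Proof.
move=> HM Hv Hs. have [H _] := mh_assoc HM a b c s.
have [f [c' [Hf [-> Hs']]]] : hsetmul mul (mul a b) (hsingle c) s.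
  apply: H. exists a, v. by split; [|split].
by exists f.
Qed.

Lemma decomp (R : zmodType) (mul : R -> R -> hset R) x y w s :
  mult_hyperring mul -> hcommutative mul -> mul x y w -> Pow mul w s ->
  exists a b, Pow mul x a /\ Pow mul y b /\ mul a b s.
Proof.
move=> HM Hco Hw; elim=> [|t u s' _ [a1 [b1 [Ha1 [Hb1 Ht]]]] _ [a2 [b2 [Ha2 [Hb2 Hu]]]] Hs].
  exists x, y. split; [exact: Pow_base|split; [exact: Pow_base|exact Hw]].
have [v [Hv Hs1]] := assocRL HM Ht Hs.
have Hv' : mul u b1 v by apply/Hco.
have [e [He Hv2]] := assocRL HM Hu Hv'.
have [f [Hf Hs2]] := assocLR HM Hv2 Hs1.
exists f, e. split; first exact: (Pow_mul Ha1 Ha2 Hf).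
split; last exact Hs2.
apply: (Pow_mul Hb1 Hb2). by apply/Hco.
Qed.

Definition colon (R : zmodType) (mul : R -> R -> hset R) (P : hset R) (c : R)
  : hset R := fun r => hsubset (mul r c) P.

Lemma colon_sup (R : zmodType) (mul : R -> R -> hset R) P c :
  hcommutative mul -> hyperideal mul P -> hsubset P (colon mul P c).
Proof.
move=> HCo HP r Pr v Hv. apply: ((proj2 (proj2 HP)) c r Pr v). by apply/HCo.
Qed.

Lemma colon_hyp (R : zmodType) (mul : R -> R -> hset R) P c :
  mult_hyperring mul -> hcommutative mul -> hyperideal mul P ->
  hyperideal mul (colon mul P c).
Proof.
move=> HM Hco HP. split; [|split].
- have [[x Px] _] := HP. exists x. exact: colon_sup.
- move=> r s Hr Hs v Hv.
  have [p [u [Hp [Hu ->]]]] := mh_distr HM Hv.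
  apply: (hyp_add HP); first exact: Hr p Hp.
  have Hu' : mul s c (- u)%R by apply/(mh_oppl HM s c u).
  have := hyp_opp HP (Hs _ Hu'). by rewrite opprK.
- move=> t r Hr w Hw v Hv.
  have [u [Hu Hv']] := assocRL HM Hw Hv.
  exact: (proj2 (proj2 HP)) t u (Hr u Hu) v Hv'.
Qed.

Lemma exists_prime (R : zmodType) (mul : R -> R -> hset R) (I : hset R) z :
  mult_hyperring mul -> hcommutative mul -> hyperideal mul I ->
  (forall s, Pow mul z s -> ~ I s) ->
  exists P, prime_hyperideal mul P /\ hsubset I P /\ ~ P z.
Proof.
move=> HM Hco HI Hdis.
pose good (J : set R) := hyperideal mul J /\ hsubset I J /\
   (forall s, Pow mul z s -> ~ J s).
pose Pfam (J : set R) := good J \/ J = set0.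
have goodI : good I by split; [|split].
have goodX : forall X x, Pfam X -> X x -> good X.
  move=> X x [//|->] //.
have [A [PA Amax]] : exists A, Pfam A /\ forall B, (A `<` B)%classic -> ~ Pfam B.
  apply: Zorn_bigcup => F FP Ftot.
  case: (pselect (exists X, F X /\ exists x, X x)) => [[X0 [FX0 [x0 X0x]]]|Hno].
  - left. have gX0 := goodX _ _ (FP _ FX0) X0x.
    split; [split; [|split]|split].
    + exists x0. by exists X0.
    + move=> x y [X1 FX1 X1x] [X2 FX2 X2y].
      case: (Ftot _ _ FX1 FX2) => Hs.
      * have g2 := goodX _ _ (FP _ FX2) X2y. exists X2 => //.
        exact: (proj1 (proj2 (proj1 g2))) x y (Hs _ X1x) X2y.
      * have g1 := goodX _ _ (FP _ FX1) X1x. exists X1 => //.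
        exact: (proj1 (proj2 (proj1 g1))) x y X1x (Hs _ X2y).
    + move=> r x [X FX Xx] v Hv. exists X => //.
      exact: (proj2 (proj2 (proj1 (goodX _ _ (FP _ FX) Xx)))) r x Xx v Hv.
    + move=> v Iv. exists X0 => //. exact: (proj1 (proj2 gX0)).
    + move=> s Hs [X FX Xs]. exact: (proj2 (proj2 (goodX _ _ (FP _ FX) Xs))) s Hs Xs.
  - right. apply/seteqP; split => x //= [X FX Xx].
    exfalso; apply: Hno. exists X; split => //. by exists x.
have gA : good A.
  case: PA => // HA. exfalso. apply: (Amax I); last by left.
  rewrite HA. split => //. move=> H. have [[x Ix] _] := HI. exact: H x Ix.
have [HA [IA DA]] := gA.
have key : forall c d, ~ A d -> hsubset (mul d c) A ->
    exists s, Pow mul z s /\ hsubset (mul s c) A.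
  move=> c d nAd Hdc.
  case: (pselect (exists s, Pow mul z s /\ hsubset (mul s c) A)) => // Hn.
  exfalso. apply: (Amax (colon mul A c)).
    split; first exact: colon_sup.
    move=> H. apply: nAd. apply: H. exact Hdc.
  left. split; [exact: colon_hyp|split].
    move=> v Iv. exact: colon_sup (IA v Iv).
  move=> s Hs Hc. apply: Hn. by exists s.
exists A. split; last split => //; last exact: DA (@Pow_base _ mul z).
split => //. split; first by exists z; exact: DA (@Pow_base _ mul z).
move=> x y Hxy.
case: (pselect (A x)) => Ax; first by left.
case: (pselect (A y)) => Ay; first by right.
exfalso.
have Hyx : hsubset (mul y x) A by move=> v Hv; apply: Hxy; apply/Hco.
have [s [Ps Hsx]] := key x y Ay Hyx.
have Hxs : hsubset (mul x s) A by move=> v Hv; apply: Hsx; apply/Hco.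
have [t [Pt Hts]] := key s x Ax Hxs.
have [v Hv] := mh_nonempty HM t s.
exact: DA v (Pow_mul Pt Ps Hv) (Hts v Hv).
Qed.

Theorem mainTheorem4 (R : zmodType) (mul : R -> R -> hset R)
    (alpha : R -> R) (I : hset R) :
  mult_hyperring mul -> hcommutative mul -> has_identity mul ->
  all_hyperideals_C mul ->
  good_endomorphism mul alpha ->
  alpha_prime mul alpha I ->
  alpha_prime mul alpha (prime_radical mul I).
Proof.
move=> HM Hco _ HC Hg [HI Hap]. split.
  split; [|split].
  - exists 0%R => P HP _. exact: hyp_zero (proj1 HP).
  - move=> x y Hx Hy P HP HIP. exact: (proj1 (proj2 (proj1 HP))) x y (Hx P HP HIP) (Hy P HP HIP).
  - move=> r x Hx v Hv P HP HIP. exact: (proj2 (proj2 (proj1 HP))) r x (Hx P HP HIP) v Hv.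
move=> x y Hxy.
case: (pselect (prime_radical mul I x)) => Hx; first by left.
right.
have [w Hw] := mh_nonempty HM x y.
have Hrw := Hxy w Hw.
have [s [Ps Is]] : exists s, Pow mul w s /\ I s.
  case: (pselect (exists s, Pow mul w s /\ I s)) => // Hn.
  have [P [HP [HIP nPw]]] : exists P, prime_hyperideal mul P /\ hsubset I P /\ ~ P w.
    apply: exists_prime => // s Hs Is. apply: Hn. by exists s.
  by exfalso; apply: nPw; apply: Hrw.
have [a [b [Pa [Pb Hab]]]] := decomp HM Hco Hw Ps.
have Habs := C2 HC HI Hab Is.
case: (Hap a b Habs) => [Ia|Iab].
  exfalso. apply: Hx => P HP HIP. exact: pow_prime HC HP Pa (HIP a Ia).
move=> P HP HIP. exact: pow_prime HC HP (pow_alpha Hg Pb) (HIP _ Iab).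
Qed.
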